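(* For every positive integer $n$ and every string $u$ of length $n$ over a finite alphabet, the sum of the exponents of all cubic runs in $u$ is less than $2.5\,n$.
   Context: For a word $u=u_1\cdots u_m$, the (shortest) period is the smallest positive integer $p$ with $u_i=u_{i+p}$ for all $1\le i\le m-p$; $u[i..j]=u_i\cdots u_j$. A run in $u$ is an interval $[i..j]$ such that the period $p$ of $u[i..j]$ satisfies $2p\le j-i+1$, and $u[i-1]\ne u[i+p-1]$ (or $i=1$) and $u[j-p+1]\ne u[j+1]$ (or $j=|u|$). Its exponent is $(j-i+1)/p$. A cubic run is a run $[i..j]$ whose shortest period $p$ satisfies $3p\le j-i+1$. *)

(* Defs.v *)
From mathcomp Require Import all_boot all_order all_algebra.
Set Implicit Arguments. Unset Strict Implicit. Unset Printing Implicit Defensive.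
Import GRing.Theory Num.Theory.

(* Words are sequences over a finite alphabet T; positions are 1-indexed as in
   the paper: letter u_k is [nth x0 u k.-1] (x0 irrelevant for 1 <= k <= |u|). *)
Section Runs.
Variable T : finType.

Definition letter (u : seq T) (k : nat) : option T :=
  if k is k'.+1 then nth None (map Some u) k' else None.

Definition is_periodb (u : seq T) (i j p : nat) : bool :=
  (0 < p) && all (fun k => letter u k == letter u (k + p)) (index_iota i (j - p).+1).

(* shortest period of u[i..j]; (j - i + 1) is always a period so this is the
   smallest positive p with the period property *)
Definition period (u : seq T) (i j : nat) : nat :=
  head (j - i).+1 [seq p <- iota 1 (j - i).+1 | is_periodb u i j p].

Definition is_run (u : seq T) (i j : nat) : bool :=
  let p := period u i j in
  [&& 1 <= i, i <= j, j <= size u, 2 * p <= j - i + 1,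
      (i == 1) || (letter u i.-1 != letter u (i + p - 1)) &
      (j == size u) || (letter u (j - p + 1) != letter u j.+1)].

Definition is_cubic_run (u : seq T) (i j : nat) : bool :=
  is_run u i j && (3 * period u i j <= j - i + 1).

Definition exponent (u : seq T) (i j : nat) : rat :=
  ((j - i + 1)%:R / (period u i j)%:R)%R.

Definition cubic_exp_sum (u : seq T) : rat :=
  (\sum_(i < (size u).+1) \sum_(j < (size u).+1 | is_cubic_run u i j)
      exponent u i j)%R.
End Runs.

(* Main.v *)
Require Import Defs.
From mathcomp Require Import all_boot all_order all_algebra.
From mathcomp Require Import zify ring.
Import Order.TTheory GRing.Theory Num.Theory.
Set Implicit Arguments. Unset Strict Implicit. Unset Printing Implicit Defensive.

Section Lex.
Variable T : finType.

Definition ltT (l : bool) (x y : T) : bool :=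
  if l then (enum_rank y < enum_rank x)%N else (enum_rank x < enum_rank y)%N.

Lemma ltT_irr l x : ltT l x x = false.
Proof. by case: l; rewrite /ltT ltnn. Qed.

Lemma ltT_asym l x y : ltT l x y -> ltT l y x = false.
Proof. by case: l; rewrite /ltT => H; apply/negbTE; rewrite -leqNgt ltnW. Qed.

Lemma ltT_trans l x y z : ltT l x y -> ltT l y z -> ltT l x z.
Proof. by case: l; rewrite /ltT => H1 H2; [apply: ltn_trans H2 H1|apply: ltn_trans H1 H2]. Qed.

Lemma ltT_total l x y : x != y -> ltT l x y || ltT l y x.
Proof.
move=> nxy; have : enum_rank x != enum_rank y.
  by apply: contra nxy => /eqP /enum_rank_inj ->.
by case: l; rewrite /ltT neq_ltn // orbC.
Qed.

Lemma ltT_neg l x y : ltT (~~ l) x y = ltT l y x.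
Proof. by case: l. Qed.

Fixpoint ltlex l (s t : seq T) : bool :=
  match s, t with
  | [::], [::] => false
  | [::], _ :: _ => true
  | _ :: _, [::] => false
  | x :: s', y :: t' => ltT l x y || (x == y) && ltlex l s' t'
  end.

Lemma ltlex_nilr l s : ltlex l s [::] = false.
Proof. by case: s. Qed.

Lemma ltlex_irr l s : ltlex l s s = false.
Proof. by elim: s => //= x s ->; rewrite ltT_irr andbF. Qed.

Lemma ltlex_asym l s t : ltlex l s t -> ltlex l t s = false.
Proof.
elim: s t => [|x s IH] [|y t] //=.
case/orP => [H|/andP[/eqP-> H]]; first by rewrite ltT_asym //= (eq_sym y) ;
  apply/negbTE/nandP; left; apply: contraTneq H => ->; rewrite ltT_irr.
by rewrite ltT_irr IH // andbF.
Qed.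

Lemma ltlex_total l s t : size s = size t -> s != t -> ltlex l s t || ltlex l t s.
Proof.
elim: s t => [|x s IH] [|y t] //= [] Hs.
case: (eqVneq x y) => [->|nxy].
  rewrite eqseq_cons eqxx /= => nst; rewrite !ltT_irr /=; exact: IH.
by move=> _; case/orP: (ltT_total l nxy) => ->; rewrite ?orbT.
Qed.

Lemma ltlex_catl l s x y : ltlex l (s ++ x) (s ++ y) = ltlex l x y.
Proof. by elim: s => //= a s ->; rewrite ltT_irr eqxx. Qed.

Lemma ltlex_catsz l x1 y1 x2 y2 : size x1 = size y1 -> ltlex l x1 y1 ->
  ltlex l (x1 ++ x2) (y1 ++ y2).
Proof.
elim: x1 y1 => [|a x1 IH] [|b y1] //= [] Hs.
by case/orP => [->//|/andP[-> /(IH _ Hs) ->]]; rewrite orbT.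
Qed.

Lemma ltlex_prefix l s x : ltlex l (s ++ x) s = false.
Proof. by elim: s => [|a s IH] /=; [rewrite ltlex_nilr|rewrite ltT_irr IH andbF]. Qed.

Lemma ltlex_trans l s t v : ltlex l s t -> ltlex l t v -> ltlex l s v.
Proof.
elim: s t v => [|a s IH] [|b t] [|c v] //=.
case/orP => [H1|/andP[/eqP-> H1]] /orP [H2|/andP[/eqP<- H2]].
- by rewrite (ltT_trans H1 H2).
- by rewrite H1.
- by rewrite H2.
- by rewrite (IH _ _ H1 H2) eqxx orbT.
Qed.

Definition lyndon l (x : seq T) : bool :=
  all (fun k => ltlex l x (drop k x)) (iota 1 (size x).-1).

Lemma exists_min l (f : nat -> seq T) (s : seq nat) : s != [::] ->
  exists2 a0, a0 \in s & forall a, a \in s -> ~~ ltlex l (f a) (f a0).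
Proof.
elim: s => [|x s IH] // _.
case: (eqVneq s [::]) => [->|/IH [m ms Hm]].
  by exists x; rewrite ?inE // => a; rewrite inE => /eqP ->; rewrite ltlex_irr.
case Hxm: (ltlex l (f x) (f m)).
  exists x; first by rewrite inE eqxx.
  move=> a; rewrite inE => /orP [/eqP ->|Ha]; first by rewrite ltlex_irr.
  apply/negP => H; have := Hm a Ha; rewrite (ltlex_trans H Hxm) //.
exists m; first by rewrite inE ms orbT.
move=> a; rewrite inE => /orP [/eqP ->|Ha]; last exact: Hm.
by rewrite Hxm.
Qed.
End Lex.


Section Words.
Variable T : finType.
Variable u : seq T.
Variable x0 : T.

Definition W (k : nat) : T := nth x0 u k.-1.

Lemma letterW k : 0 < k <= size u -> letter u k = Some (W k).
Proof. by case: k => // k /= H; rewrite (nth_map x0). Qed.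

Definition win a m := map W (iota a m).

Lemma size_win a m : size (win a m) = m.
Proof. by rewrite size_map size_iota. Qed.

Lemma win_add a m1 m2 : win a (m1 + m2) = win a m1 ++ win (a + m1) m2.
Proof. by rewrite /win iotaD map_cat. Qed.

Lemma win_S a m : win a m.+1 = W a :: win a.+1 m.
Proof. by []. Qed.

Lemma win_shift a m d : (forall k, a <= k < a + m -> W k = W (k + d)) ->
  win a m = win (a + d) m.
Proof.
move=> H; rewrite /win [a + d]addnC iotaDl -map_comp; apply/eq_in_map => k.
by rewrite mem_iota => /H /= ->; rewrite addnC.
Qed.

Lemma drop_win a m k : k <= m -> drop k (win a m) = win (a + k) (m - k).
Proof.
by move=> km; rewrite -{1}(subnKC km) win_add drop_size_cat // size_win.
Qed.

Lemma nth_win a m s : s < m -> nth x0 (win a m) s = W (a + s).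
Proof. by move=> sm; rewrite (nth_map 0) ?size_iota // nth_iota. Qed.

Lemma lyndon_lt l a m : 1 < m -> lyndon l (win a m) -> ltT l (W a) (W (a + m - 1)).
Proof.
move=> m1 /allP /(_ (m - 1)); rewrite size_win mem_iota.
have -> : 1 <= m - 1 < 1 + m.-1 by lia.
move=> /(_ isT); rewrite drop_win ?leq_subr //.
have -> : m - (m - 1) = 1 by lia.
case: m m1 => // m _; rewrite win_S /= ltlex_nilr andbF orbF.
by have -> : a + (m.+1 - 1) = a + m.+1 - 1 by lia.
Qed.

Definition per i j p := forall k, i <= k -> k + p <= j -> W k = W (k + p).

Inductive cspec (i j p : nat) : Prop :=
  CSpec of 0 < i & j <= size u & 0 < p & 3 * p <= j - i + 1 & per i j p
  & (forall q, 0 < q < p -> ~ per i j q)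
  & (1 < i -> W i.-1 != W (i + p - 1))
  & (j < size u -> W (j - p + 1) != W j.+1).

Lemma head_filter_min (P : pred nat) d a N q : a <= q ->
  q < head d (filter P (iota a N)) -> q < a + N -> ~~ P q.
Proof.
elim: N a => [|N IH] a /=; first by move=> *; exfalso; lia.
case Pa: (P a) => /=; first by move=> *; exfalso; lia.
move=> aq qh qN; case: (eqVneq q a) => [->|nqa]; first by rewrite Pa.
apply: IH; [idtac|exact: qh|lia]. lia.
Qed.

Lemma head_filterP (P : pred nat) d s : has P s -> P (head d (filter P s)).
Proof. by elim: s => //= x s IH; case Px: (P x) => //= /IH. Qed.

Lemma per_of_periodb i j p : 0 < i -> j <= size u -> is_periodb u i j p -> per i j p.
Proof.
move=> i0 ju /andP [p0 /allP H] k ik kj.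
have := H k; rewrite mem_index_iota; have -> : i <= k < (j - p).+1 by lia.
move=> /(_ isT); rewrite !letterW; [|lia|lia].
by rewrite (inj_eq (@Some_inj _)) => /eqP.
Qed.

Lemma periodb_of_per i j p : 0 < i -> j <= size u -> 0 < p -> per i j p -> is_periodb u i j p.
Proof.
move=> i0 ju p0 H; rewrite /is_periodb p0 /=; apply/allP => k.
rewrite mem_index_iota => Hk; rewrite !letterW; [|lia|lia].
by rewrite H //; lia.
Qed.

Lemma cubicP i j : is_cubic_run u i j -> cspec i j (period u i j).
Proof.
case/andP => /and5P [i1 ij ju p2 /andP [lft rgt]] p3.
set p := period u i j.
have pP : is_periodb u i j p.
  apply: head_filterP; apply/hasP; exists (j - i).+1; first by rewrite mem_iota; lia.
  rewrite /is_periodb /=; have -> : j - (j - i).+1 = i.-1 by lia.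
  by rewrite prednK // /index_iota subnn.
have p0 : 0 < p by case/andP: pP.
constructor => //.
- exact: per_of_periodb.
- move=> q /andP [q0 qp] Hq.
  have : ~~ is_periodb u i j q.
    by apply: (@head_filter_min _ (j - i).+1 1 (j - i).+1); [lia|exact: qp|lia].
  by rewrite periodb_of_per.
- move=> i1'; move: lft; have -> : (i == 1) = false by lia.
  rewrite /= !letterW; [|lia|lia].
  by rewrite (inj_eq (@Some_inj _)).
- move=> ju'; move: rgt; have -> : (j == size u) = false by lia.
  rewrite (@letterW j.+1); last lia.
  rewrite letterW; last lia.
  by rewrite /= (inj_eq (@Some_inj _)).
Qed.

End Words.


Section Runs3.
Variable T : finType.
Variable u : seq T.
Variable x0 : T.
Local Notation W := (W u x0).
Local Notation win := (win u x0).
Local Notation per := (per u x0).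
Local Notation cspec := (cspec u x0).

Lemma per_mod i j p (H : per i j p) x m : i <= x -> x + m * p <= j -> W x = W (x + m * p).
Proof.
elim: m => [|m IH] ix hx; first by rewrite mul0n addn0.
rewrite IH //; last by move: hx; rewrite mulSn; lia.
rewrite H; [|lia|move: hx; rewrite mulSn; lia].
by congr W; rewrite mulSn; lia.
Qed.

Lemma per_modeq i j p (H : per i j p) : 0 < p -> forall x y,
  i <= x <= j -> i <= y <= j -> x %% p = y %% p -> W x = W y.
Proof.
move=> p0 x y; wlog xy : x y / x <= y.
  move=> Hw Hx Hy Hm; case: (leqP x y) => [xy|yx]; first exact: Hw.
  by symmetry; apply: Hw => //; apply: ltnW.
move=> Hx Hy Hm.
have dv : p %| y - x by rewrite -eqn_mod_dvd // Hm.
have E : x + (y - x) %/ p * p = y by rewrite divnK // subnKC.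
by rewrite -[in W y]E; apply: (per_mod H); rewrite ?E; lia.
Qed.



Lemma overlap_left i j i' j' p a : cspec i j p -> cspec i' j' p ->
  i < i' -> i' < a -> a + p <= j.+1 -> False.
Proof.
case=> i0 ju p0 p3 Hper _ _ _ [i0' ju' p0' p3' Hper' _ Hl' _] ii ia ap.
have : 1 < i' by lia.
move/Hl' => /eqP; apply.
rewrite (Hper i'.-1); [|lia|lia].
by congr W; lia.
Qed.

Lemma overlap_right i j i' j' p a : cspec i j p -> cspec i' j' p ->
  j < j' -> i' < a -> a + p <= j.+1 -> False.
Proof.
case=> i0 ju p0 p3 Hper _ _ Hr [i0' ju' p0' p3' Hper' _ Hl' _] jj ia ap.
have : j < size u by lia.
move/Hr => /eqP; apply.
rewrite (Hper' (j - p + 1)); [|lia|lia].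
by congr W; lia.
Qed.

Lemma overlap i j i' j' p a : cspec i j p -> cspec i' j' p ->
  i < a -> i' < a -> a + p <= j.+1 -> a + p <= j'.+1 -> i = i' /\ j = j'.
Proof.
move=> S S' ia ia' aj aj'; split.
  case: (ltngtP i i') => // h; exfalso.
    exact: (overlap_left S S' h ia' aj).
  exact: (overlap_left S' S h ia aj').
case: (ltngtP j j') => // h; exfalso.
  exact: (overlap_right S S' h ia' aj).
exact: (overlap_right S' S h ia aj').
Qed.


Lemma root_exists i j p l : cspec i j p ->
  exists a0, [/\ i < a0, a0 <= i + p & lyndon l (win a0 p)].
Proof.
case=> i0 ju p0 p3 Hper Hmin _ _.
have ne : iota i.+1 p != [::] by case: p p0 {p3 Hper Hmin}.
have [a0 Ha0 Hmin0] := exists_min l (fun a => win a p) ne.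
move: Ha0; rewrite mem_iota => /andP [a0i a0p].
have mincond : forall k, k < p -> ~~ ltlex l (win (a0 + k) p) (win a0 p).
  move=> k kp; case: (leqP (a0 + k) (i + p)) => h.
    by apply: Hmin0; rewrite mem_iota; lia.
  have -> : win (a0 + k) p = win (a0 + k - p) p.
    rewrite -[X in win X p = _](subnK (_ : p <= a0 + k)); last lia.
    symmetry; apply: win_shift => t Ht; apply: Hper; lia.
  by apply: Hmin0; rewrite mem_iota; lia.
have distinct : forall k, 0 < k < p -> win (a0 + k) p != win a0 p.
  move=> k /andP [k0 kp]; apply/negP => /eqP E.
  apply: (Hmin k); first by rewrite k0 kp.
  move=> t it tj.
  have sp : (t + p - a0) %% p < p by rewrite ltn_pmod.
  have m1 : (a0 + (t + p - a0) %% p) %% p = t %% p.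
    by rewrite modnDmr subnKC ?modnDr //; lia.
  move Es : ((t + p - a0) %% p) => s; rewrite Es in sp m1.
  have m2 : (a0 + k + s) %% p = (t + k) %% p.
    have -> : a0 + k + s = k + (a0 + s) by lia.
    by rewrite -modnDmr m1 modnDmr [k + t]addnC.
  have E1 : W (a0 + k + s) = W (a0 + s).
    by have := congr1 (fun w => nth x0 w s) E; rewrite /= !nth_win.
  rewrite (@per_modeq i j p Hper p0 t (a0 + s)); [|lia|lia|by rewrite m1].
  rewrite (@per_modeq i j p Hper p0 (t + k) (a0 + k + s)); [|lia|lia|by rewrite m2].
  by rewrite E1.
have ltk : forall k, 0 < k < p -> ltlex l (win a0 p) (win (a0 + k) p).
  move=> k kp.
  have := @ltlex_total _ l (win a0 p) (win (a0 + k) p).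
  rewrite !size_win eq_sym (distinct k kp) => /(_ erefl isT) /orP [//|H].
  by have := mincond k; rewrite H; move=> /(_ _) /=; case/andP: kp => _ /[swap] /[apply].
exists a0; split => //.
apply/allP => k; rewrite size_win mem_iota => /andP [k1 kp'].
have kp : 0 < k < p by lia.
rewrite drop_win; last lia.
have Hlt := ltk k kp.
have ex : win a0 p = win a0 (p - k) ++ win (a0 + (p - k)) k.
  by rewrite -win_add subnK //; lia.
have ey : win (a0 + k) p = win (a0 + k) (p - k) ++ win a0 k.
  rewrite -{1}(subnK (_ : k <= p)); last lia.
  rewrite win_add; congr (_ ++ _).
  rewrite (@win_shift _ u x0 a0 k p); last by move=> t Ht; apply: Hper; lia.
  by congr win; lia.
case: (eqVneq (win a0 (p - k)) (win (a0 + k) (p - k))) => [E|NE].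
  exfalso; move: Hlt; rewrite ex ey E ltlex_catl => H2.
  have e1 : win (a0 + (p - k)) p = win (a0 + (p - k)) k ++ win (a0 + (p - k) + k) (p - k).
    by rewrite -win_add subnKC //; lia.
  have e2 : win a0 p = win a0 k ++ win (a0 + k) (p - k).
    by rewrite -win_add subnKC //; lia.
  have : ltlex l (win (a0 + (p - k)) p) (win a0 p).
    by rewrite e1 e2; apply: ltlex_catsz; [rewrite !size_win|].
  by rewrite (negbTE (mincond (p - k) _)) //; lia.
have := @ltlex_total _ l (win a0 (p - k)) (win (a0 + k) (p - k)).
rewrite !size_win => /(_ erefl NE) /orP [H|H].
  by rewrite ex -[X in ltlex _ _ X]cats0; apply: ltlex_catsz; rewrite ?size_win.
exfalso.
have : ltlex l (win (a0 + k) p) (win a0 p).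
  by rewrite ey ex; apply: ltlex_catsz; rewrite ?size_win.
by rewrite (ltlex_asym Hlt).
Qed.

Lemma not_lyndon_longer i j p l a m : cspec i j p ->
  (j < size u -> ltT l (W j.+1) (W (j.+1 - p))) ->
  i <= a -> a + p <= j.+1 -> p < m -> a + m <= (size u).+1 -> ~~ lyndon l (win a m).
Proof.
case=> i0 ju p0 p3 Hper _ _ _ Hl ia ap pm am.
apply/negP => /allP /(_ p); rewrite size_win mem_iota.
have -> : 1 <= p < 1 + m.-1 by lia.
move=> /(_ isT); rewrite drop_win; last lia.
case: (leqP (a + m) j.+1) => h.
  have -> : win a m = win (a + p) (m - p) ++ win (a + (m - p)) p.
    rewrite -(@win_shift _ u x0 a (m - p) p); last by move=> t Ht; apply: Hper; lia.
    by rewrite -win_add subnK //; lia.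
  by rewrite ltlex_prefix.
have jn : j < size u by lia.
have H := Hl jn.
move Edd : (j.+1 - (a + p)) => dd.
have [t1 E1] : exists t1, win a m = win (a + p) dd ++ W (j.+1 - p) :: t1.
  exists (win (a + dd).+1 (m - dd).-1).
  rewrite -[in LHS](subnKC (_ : dd <= m)); last lia.
  rewrite win_add (@win_shift _ u x0 a dd p); last by move=> t Ht; apply: Hper; lia.
  rewrite -[X in win (a + dd) X](prednK (_ : 0 < m - dd)); last lia.
  by rewrite win_S; congr (_ ++ W _ :: _); lia.
have [t2 E2] : exists t2, win (a + p) (m - p) = win (a + p) dd ++ W j.+1 :: t2.
  exists (win (a + p + dd).+1 (m - p - dd).-1).
  rewrite -[in LHS](subnKC (_ : dd <= m - p)); last lia.
  rewrite win_add.
  rewrite -[X in win (a + p + dd) X](prednK (_ : 0 < m - p - dd)); last lia.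
  by rewrite win_S; congr (_ ++ W _ :: _); lia.
rewrite E1 E2 ltlex_catl /= (ltT_asym H) /=.
by case/andP => /eqP E; move: H; rewrite E ltT_irr.
Qed.

End Runs3.


Section Final.
Variable T : finType.
Variable u : seq T.
Variable x0 : T.
Local Notation W := (W u x0).
Local Notation win := (win u x0).
Local Notation cspec := (cspec u x0).

Definition lr i j := (enum_rank (W (j.+1 - period u i j)) < enum_rank (W j.+1))%N.

Lemma lr_spec i j : cspec i j (period u i j) -> j < size u ->
  ltT (lr i j) (W j.+1) (W (j.+1 - period u i j)).
Proof.
case=> i0 ju p0 p3 _ _ _ Hr jn.
have ne : W (j.+1 - period u i j) != W j.+1.
  by have := Hr jn; have -> : j - period u i j + 1 = j.+1 - period u i j by lia.
have nr : enum_rank (W j.+1) != enum_rank (W (j.+1 - period u i j)).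
  by apply: contra ne => /eqP /enum_rank_inj ->.
rewrite /ltT; case E: (lr i j); move: E; rewrite /lr => E //.
by rewrite ltn_neqAle nr leqNgt E.
Qed.

Definition B i j : {set 'I_(size u).+1} :=
  [set a : 'I_(size u).+1 | (i < a) && (a + period u i j <= j.+1)
                            && lyndon (lr i j) (win a (period u i j))].

Lemma B_count i j : is_cubic_run u i j ->
  2 * (j - i + 1) <= 5 * #|B i j| * period u i j.
Proof.
move/(cubicP x0) => S.
have [a0 [a0i a0p Ly]] := root_exists (lr i j) S.
move: S Ly; set p := period u i j => S Ly.
case: S => i0 ju p0 p3 Hper _ _ _.
move EL : (j - i + 1) => L.
move Eq : (L %/ p) => q.
have q3 : 3 <= q by rewrite -Eq leq_divRL // -EL.
have qL : q * p <= L by rewrite -Eq leq_trunc_div.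
have Lq : L < q.+1 * p by rewrite -Eq ltn_ceil.
have cnt : q - 1 <= #|B i j|.
  pose f := fun m : 'I_(q - 1) => (inord (a0 + m * p) : 'I_(size u).+1).
  have mb : forall m : 'I_(q - 1), m * p + p + p <= q * p.
    move=> m; have := ltn_ord m => mq.
    have : m.+2 * p <= q * p by rewrite leq_mul2r; apply/orP; right; lia.
    by rewrite !mulSn; lia.
  have fval : forall m : 'I_(q - 1), (f m : nat) = a0 + m * p.
    by move=> m; rewrite /f inordK //; have := mb m; lia.
  have finj : injective f.
    move=> m1 m2 /(congr1 (@nat_of_ord _)); rewrite !fval => /addnI /eqP.
    by rewrite eqn_mul2r eqn0Ngt p0 /= => /eqP; apply: val_inj.
  rewrite -{1}(card_ord (q - 1)) -cardsT -(card_imset _ finj).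
  apply: subset_leq_card; apply/subsetP => _ /imsetP [m _ ->].
  have := mb m => hm.
  rewrite inE fval.
  have -> : (i < a0 + m * p) && (a0 + m * p + p <= j.+1) by apply/andP; split; lia.
  rewrite /= -(@win_shift _ u x0 a0 p (m * p)) //.
  by move=> t Ht; apply: (per_mod Hper); lia.
have e1 : (q - 1) * p = q * p - p by rewrite mulnBl mul1n.
have h3 : 3 * p <= q * p by rewrite leq_mul2r q3 orbT.
apply: (leq_trans _ (_ : 5 * (q - 1) * p <= 5 * #|B i j| * p)); last first.
  by rewrite leq_mul2r leq_mul2l cnt !orbT.
rewrite -mulnA e1; move: Lq; rewrite mulSn; lia.
Qed.

Lemma key_root i j p l (a : nat) : cspec i j p -> i < a -> a + p <= j.+1 ->
  (1 < p -> lyndon l (win a p) -> ltT l (W a) (W a.-1)) /\ (p = 1 -> W a = W a.-1).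
Proof.
case=> i0 ju p0 p3 Hper _ _ _ ia ap; split.
  move=> p1 /(lyndon_lt p1).
  by rewrite (Hper a.-1); [have -> : a.-1 + p = a + p - 1 by lia|lia|lia].
move=> p1; rewrite (Hper a.-1); [|lia|lia].
by congr W; lia.
Qed.

Lemma B_disj i j i' j' (a : 'I_(size u).+1) : is_cubic_run u i j -> is_cubic_run u i' j' ->
  a \in B i j -> a \in B i' j' -> i = i' /\ j = j'.
Proof.
move=> /(cubicP x0) S /(cubicP x0) S'.
rewrite !inE => /andP [/andP [ia ap] Ly] /andP [/andP [ia' ap'] Ly'].
have a_le := ltn_ord a.
have [K1 K2] := key_root (lr i j) S ia ap.
have [K1' K2'] := key_root (lr i' j') S' ia' ap'.
have [p0 p0'] : 0 < period u i j /\ 0 < period u i' j' by case: S; case: S'.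
have [ju ju'] : j <= size u /\ j' <= size u by case: S; case: S'.
case: (eqVneq (period u i j) (period u i' j')) => [Epp|npp].
  by rewrite Epp in S ap; apply: (overlap S S' ia ia' ap ap').
exfalso.
case: (eqVneq (period u i j) 1) => [e1|n1].
  have p1 : 1 < period u i' j' by move: npp; rewrite e1; lia.
  by have := K1' p1 Ly'; rewrite (K2 e1) ltT_irr.
case: (eqVneq (period u i' j') 1) => [e1'|n1'].
  have p1 : 1 < period u i j by lia.
  by have := K1 p1 Ly; rewrite (K2' e1') ltT_irr.
have p1 : 1 < period u i j by lia.
have p1' : 1 < period u i' j' by lia.
case: (eqVneq (lr i j) (lr i' j')) => [El|nl].
  case: (ltngtP (period u i j) (period u i' j')) => hp.
  - have := @not_lyndon_longer _ u x0 i j _ (lr i j) a (period u i' j') S (lr_spec S).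
    rewrite El Ly' => H; suff : ~~ true by [].
    by apply: H; [lia|exact: ap|exact: hp|lia].
  - have := @not_lyndon_longer _ u x0 i' j' _ (lr i' j') a (period u i j) S' (lr_spec S').
    rewrite -El Ly => H; suff : ~~ true by [].
    by apply: H; [lia|exact: ap'|exact: hp|lia].
  - by rewrite hp eqxx in npp.
have El : lr i' j' = ~~ lr i j by move: nl; case: (lr i j); case: (lr i' j').
have := K1' p1' Ly'; rewrite El ltT_neg.
by rewrite (ltT_asym (K1 p1 Ly)).
Qed.

Lemma count_gt1 n : \sum_(a < n.+1 | 1 < a) 1 = n.-1.
Proof.
rewrite -(big_mkord (fun a => 1 < a) (fun _ => 1)) big_mkcond /=.
elim: n => [|n IH]; first by rewrite big_nat1.
rewrite big_nat_recr //= IH. by case: n {IH} => [|m] //=; rewrite addn1.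
Qed.

Lemma sumB : \sum_(x : 'I_(size u).+1 * 'I_(size u).+1 | is_cubic_run u x.1 x.2)
   #|B x.1 x.2| <= (size u).-1.
Proof.
under eq_bigr => x _ do rewrite -sum1_card.
rewrite (exchange_big_dep (fun a : 'I_(size u).+1 => 1 < a)) /=; last first.
  move=> x a /andP [/and5P [i1 _ _ _ _] _]; rewrite inE => /andP [/andP [ia _] _]; lia.
rewrite -count_gt1; apply: leq_sum => a _.
case: (pickP (fun x : 'I_(size u).+1 * 'I_(size u).+1 =>
          is_cubic_run u x.1 x.2 && (a \in B x.1 x.2))) => [[x1 x2] Hx|none].
  rewrite (bigD1 (x1, x2)) //= big1 ?addn0 // => [[y1 y2]] /= /andP [/andP [Cy ay] nyx].
  case/andP: Hx => /= Cx ax.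
  have [e1 e2] := B_disj Cx Cy ax ay.
  have e1' : x1 = y1 by apply: val_inj.
  have e2' : x2 = y2 by apply: val_inj.
  by move: nyx; rewrite e1' e2' eqxx.
by rewrite big_pred0.
Qed.

End Final.

Theorem theorem3 (T : finType) (n : nat) (u : seq T) :
  0 < n -> size u = n -> (cubic_exp_sum u < 5%:R / 2%:R * n%:R)%R.
Proof.
Local Open Scope ring_scope.
move=> n0 Hn.
have [x0 _] : exists x0 : T, True.
  by case: u Hn => [|x s] Hn; [rewrite -Hn in n0|exists x].
rewrite /cubic_exp_sum pair_big_dep /=.
apply: (@le_lt_trans _ _ (5%:R / 2%:R * ((size u).-1)%:R)).
  have H1 : forall x : 'I_(size u).+1 * 'I_(size u).+1, is_cubic_run u x.1 x.2 ->
      exponent u x.1 x.2 <= 5%:R / 2%:R * (#|B u x0 x.1 x.2|)%:R.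
    move=> x Cx.
    have hc := B_count x0 Cx.
    have p0 : (0 < period u x.1 x.2)%N by case: (cubicP x0 Cx).
    rewrite /exponent ler_pdivrMr ?ltr0n //.
    have -> : 5%:R / 2%:R * (#|B u x0 x.1 x.2|)%:R * (period u x.1 x.2)%:R
              = (5 * #|B u x0 x.1 x.2| * period u x.1 x.2)%:R / 2%:R :> rat.
      by rewrite !natrM; field.
    by rewrite ler_pdivlMr ?ltr0n // -natrM ler_nat mulnC.
  apply: (le_trans (ler_sum _ H1)).
  rewrite -mulr_sumr -natr_sum; apply: ler_wpM2l => //.
  by rewrite ler_nat; exact: sumB.
by rewrite ltr_pM2l // ltr_nat Hn; case: n n0 {Hn}.
Qed.
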